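(* Let $\Gamma_0<\Gamma$ be a finite index inclusion of countable groups and let $\sigma_n:\Gamma_0\rightarrow\mathrm{Sym}(X_n)$ be a sofic approximation of $\Gamma_0$. If the induced sofic approximation $\mathrm{Ind}_{\Gamma_0}^{\Gamma}(\sigma_n):\Gamma\to\mathrm{Sym}(\Gamma/\Gamma_0\times X_n)$ of $\Gamma$ satisfies property $(\diamond)$, then $(\sigma_n)$ satisfies property $(\diamond)$.
   Context: For finite sets $X,Y$ and maps $\alpha,\beta:X\to Y$, $\mathrm{d}_{\mathrm{H}}(\alpha,\beta)=|X|^{-1}|\{x\in X\mid\alpha(x)\neq\beta(x)\}|$. A sofic approximation of a countable group $G$ is a sequence of maps $\sigma_n:G\to\mathrm{Sym}(X_n)$, $X_n$ finite, with $\mathrm{d}_{\mathrm{H}}(\sigma_n(g)\sigma_n(h),\sigma_n(gh))\to0$ for all $g,h\in G$ and $\mathrm{d}_{\mathrm{H}}(\sigma_n(g),\mathrm{Id}_{X_n})\to1$ for all $g\neq e$. A sofic approximation $\sigma_n:G\to\mathrm{Sym}(X_n)$ satisfies $(\diamond)$ if there exist a sofic approximation $\tau_n:G\to\mathrm{Sym}(Y_n)$ and maps $\theta_n:X_n\to Y_n$ such that (a) each $\tau_n$ is a homomorphism, (b) $\mathrm{d}_{\mathrm{H}}(\theta_n\circ\sigma_n(g),\tau_n(g)\circ\theta_n)\to0$ for every $g\in G$, and (c) $\mathrm{d}_{\mathrm{H}}(\theta_n\circ\sigma_n(g),\theta_n)\to1$ for every $g\in G\setminus\{e\}$. Induction: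 choose $s:\Gamma/\Gamma_0\to\Gamma$ with $s(e\Gamma_0)=e$ and $s(g\Gamma_0)\in g\Gamma_0$, let $c(g,h\Gamma_0)=s(gh\Gamma_0)^{-1}gs(h\Gamma_0)\in\Gamma_0$, and define $\mathrm{Ind}_{\Gamma_0}^{\Gamma}(\sigma_n)(g)(h\Gamma_0,x)=(gh\Gamma_0,\sigma_n(c(g,h\Gamma_0))x)$ for $g\in\Gamma$, $h\Gamma_0\in\Gamma/\Gamma_0$, $x\in X_n$; this is a sofic approximation of $\Gamma$. *)

(* Defs.v *)
From mathcomp Require Import all_boot all_order all_algebra all_fingroup.
Set Implicit Arguments. Unset Strict Implicit. Unset Printing Implicit Defensive.
Import Order.TTheory GRing.Theory Num.Theory.

Record Grp := {
  gcar :> Type;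
  gmul : gcar -> gcar -> gcar;
  gone : gcar;
  ginv : gcar -> gcar;
  gmulA : forall a b c, gmul a (gmul b c) = gmul (gmul a b) c;
  gmul1 : forall a, gmul gone a = a;
  gmulg1 : forall a, gmul a gone = a;
  gmulV : forall a, gmul (ginv a) a = gone;
  gmulgV : forall a, gmul a (ginv a) = gone;
  gcountable : exists f : gcar -> nat, injective f }.

Arguments gmul {G} : rename.
Arguments gone {G} : rename.
Arguments ginv {G} : rename.

Record subgroup (G : Grp) := {
  smem : pred G;
  smem1 : smem gone;
  smemM : forall a b, smem a -> smem b -> smem (gmul a b);
  smemV : forall a, smem a -> smem (ginv a) }.

Section SubGrp.
Variables (G : Grp) (H : subgroup G).
Let T := {x : G | smem H x}.
Definition sub_mul (a b : T) : T :=
  exist _ (gmul (val a) (val b)) (smemM (valP a) (valP b)).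
Definition sub_one : T := exist _ gone (smem1 H).
Definition sub_inv (a : T) : T := exist _ (ginv (val a)) (smemV (valP a)).
Lemma sub_mulA a b c : sub_mul a (sub_mul b c) = sub_mul (sub_mul a b) c.
Proof. by apply: val_inj; rewrite /= gmulA. Qed.
Lemma sub_mul1 a : sub_mul sub_one a = a.
Proof. by apply: val_inj; rewrite /= gmul1. Qed.
Lemma sub_mulg1 a : sub_mul a sub_one = a.
Proof. by apply: val_inj; rewrite /= gmulg1. Qed.
Lemma sub_mulV a : sub_mul (sub_inv a) a = sub_one.
Proof. by apply: val_inj; rewrite /= gmulV. Qed.
Lemma sub_mulgV a : sub_mul a (sub_inv a) = sub_one.
Proof. by apply: val_inj; rewrite /= gmulgV. Qed.
Lemma sub_countable : exists f : T -> nat, injective f.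
Proof.
have [f finj] := gcountable G.
by exists (fun a => f (val a)) => a b /finj /val_inj.
Qed.
Definition subGrp : Grp :=
  Build_Grp sub_mulA sub_mul1 sub_mulg1 sub_mulV sub_mulgV sub_countable.
End SubGrp.

Definition dH (X Y : finType) (a b : X -> Y) : rat :=
  (#|[set x | a x != b x]|%:R / #|X|%:R)%R.

Definition converges_to (u : nat -> rat) (l : rat) : Prop :=
  forall eps : rat, (0 < eps)%R ->
    exists N, forall n, (N <= n)%N -> (`|u n - l| < eps)%R.

Definition sofic_approx (G : Grp) (X : nat -> finType)
    (sigma : forall n, G -> {perm X n}) : Prop :=
  (forall g h : G,
     converges_to (fun n => dH (fun x => sigma n g (sigma n h x))
                               (sigma n (gmul g h))) 0) /\
  (forall g : G, g <> gone ->
     converges_to (fun n => dH (sigma n g) id) 1).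

Definition diamond (G : Grp) (X : nat -> finType)
    (sigma : forall n, G -> {perm X n}) : Prop :=
  exists (Y : nat -> finType) (tau : forall n, G -> {perm Y n})
         (theta : forall n, X n -> Y n),
    sofic_approx tau /\
    (forall n (g h : G) (y : Y n), tau n (gmul g h) y = tau n g (tau n h y)) /\
    (forall g : G,
       converges_to (fun n => dH (fun x => theta n (sigma n g x))
                                 (fun x => tau n g (theta n x))) 0) /\
    (forall g : G, g <> gone ->
       converges_to (fun n => dH (fun x => theta n (sigma n g x)) (theta n)) 1).

(** Finite-index data: a finite type I modelling Gamma/Gamma_0 with quotient map
    q (q a = q b iff a^{-1} b in Gamma_0, i.e. left cosets a Gamma_0) and a section
    s with s(e Gamma_0) = e. *)
Definition coset_data (G : Grp) (H : subgroup G) (I : finType)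
    (q : G -> I) (s : I -> G) : Prop :=
  (forall a b : G, q a = q b <-> smem H (gmul (ginv a) b)) /\
  (forall i, q (s i) = i) /\
  s (q gone) = gone.

Section Induction.
Variables (G : Grp) (H : subgroup G) (I : finType) (q : G -> I) (s : I -> G).
Hypothesis hqs : coset_data H q s.

Lemma ginv_uniq (x y : G) : gmul x y = gone -> ginv x = y.
Proof.
move=> e; rewrite -[ginv x]gmulg1 -e gmulA gmulV gmul1 //.
Qed.

Lemma ginv_mulK (g a b : G) : gmul (ginv (gmul g a)) (gmul g b) = gmul (ginv a) b.
Proof.
have -> : ginv (gmul g a) = gmul (ginv a) (ginv g).
  apply: ginv_uniq.
  by rewrite -gmulA [gmul a _]gmulA gmulgV gmul1 gmulgV.
by rewrite -gmulA [gmul (ginv g) _]gmulA gmulV gmul1.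
Qed.

Definition cocycle (g : G) (i : I) : subGrp H :=
  exist _ (gmul (ginv (s (q (gmul g (s i))))) (gmul g (s i)))
    (proj1 (proj1 hqs _ _) (proj1 (proj2 hqs) _)).

Variables (X : nat -> finType) (sigma : forall n, subGrp H -> {perm X n}).

Definition ind_fun (n : nat) (g : G) (p : I * X n) : I * X n :=
  (q (gmul g (s p.1)), sigma n (cocycle g p.1) p.2).

Lemma ind_fun_inj n g : injective (@ind_fun n g).
Proof.
move=> [i x] [j y] [/= eq1 eq2].
have eij : i = j.
  move/(proj1 (proj1 hqs _ _)): eq1; rewrite ginv_mulK.
  by move/(proj2 (proj1 hqs _ _)); rewrite !(proj1 (proj2 hqs)).
by subst j; rewrite (perm_inj eq2).
Qed.

Definition Ind n (g : G) : {perm (I * X n)} := perm (@ind_fun_inj n g).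
End Induction.

(* Main.v *)
Require Import Defs.
From mathcomp Require Import all_boot all_order all_algebra all_fingroup.
From mathcomp Require Import ring.
Set Implicit Arguments. Unset Strict Implicit. Unset Printing Implicit Defensive.
Import Order.TTheory GRing.Theory Num.Theory.
Local Open Scope ring_scope.

Lemma card_slice (I X : finType) (i0 : I) (P : pred (I * X)) :
  (#|[set x : X | P (i0, x)]| <= #|[set p | P p]|)%N.
Proof.
have inj : injective (fun x : X => (i0, x)) by move=> x y [].
rewrite -(card_imset _ inj); apply: subset_leq_card.
apply/subsetP=> y /imsetP[x]; rewrite !inE => Px ->; by rewrite ?inE.
Qed.

Lemma card_split (X : finType) (P : pred X) :
  (#|[set x | ~~ P x]| + #|[set x | P x]| = #|X|)%N.
Proof.
rewrite -(cardsC [set x | P x]) addnC; congr (_ + _)%N.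
by apply: eq_card => x; rewrite !inE.
Qed.

Lemma dH_ge0 (X Y : finType) (a b : X -> Y) : 0 <= dH a b.
Proof. by rewrite /dH divr_ge0 ?ler0n. Qed.

Lemma dH_le1 (X Y : finType) (a b : X -> Y) : dH a b <= 1.
Proof.
rewrite /dH; have [->|Xp] := posnP #|X|; first by rewrite invr0 mulr0 ler01.
rewrite ler_pdivrMr ?ltr0n // mul1r ler_nat.
exact: max_card.
Qed.

Lemma dH_eq0 (X Y : finType) (a b : X -> Y) : (forall x, a x = b x) -> dH a b = 0.
Proof.
move=> e; rewrite /dH.
have -> : [set x | a x != b x] = set0 by apply/setP=> x; rewrite !inE e eqxx.
by rewrite cards0 mul0r.
Qed.

Lemma slice_le (I X Y : finType) (i0 : I) (a b : I * X -> Y) (a' b' : X -> Y) :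
  (forall x, a' x = a (i0, x)) -> (forall x, b' x = b (i0, x)) ->
  dH a' b' <= #|I|%:R * dH a b.
Proof.
move=> ha hb; rewrite /dH.
have [X0|Xp] := posnP #|X|.
  by rewrite X0 invr0 mulr0 mulr_ge0 ?divr_ge0 ?ler0n.
have Ip : (0 < #|I|)%N by apply/card_gt0P; exists i0.
rewrite card_prod natrM.
have sI : #|I|%:R != 0 :> rat by rewrite pnatr_eq0 -lt0n.
have sX : #|X|%:R != 0 :> rat by rewrite pnatr_eq0 -lt0n.
set D := (X in #|I|%:R * (X%:R / _)).
have -> : #|I|%:R * (D%:R / (#|I|%:R * #|X|%:R)) = D%:R / #|X|%:R :> rat.
  by field; apply/andP; split.
rewrite ler_pM2r ?invr_gt0 ?ltr0n // ler_nat.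
have -> : [set x | a' x != b' x] = [set x | (fun p => a p != b p) (i0, x)].
  by apply/setP=> x; rewrite !inE ha hb.
exact: (card_slice i0 (fun p => a p != b p)).
Qed.

Lemma slice_le1 (I X Y : finType) (i0 : I) (a b : I * X -> Y) (a' b' : X -> Y) :
  (forall x, a' x = a (i0, x)) -> (forall x, b' x = b (i0, x)) ->
  1 - dH a' b' <= #|I|%:R * (1 - dH a b).
Proof.
move=> ha hb; rewrite /dH.
have Ip : (0 < #|I|)%N by apply/card_gt0P; exists i0.
have [X0|Xp] := posnP #|X|.
  by rewrite card_prod X0 muln0 !invr0 !mulr0 !subr0 mulr1 ler1n.
have IXp : (0 < #|{: I * X}|)%N by rewrite card_prod muln_gt0 Ip.
have e1 : forall (Z : finType) (P : pred Z), (0 < #|Z|)%N ->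
    1 - #|[set x | ~~ P x]|%:R / #|Z|%:R = #|[set x | P x]|%:R / #|Z|%:R :> rat.
  move=> Z P Zp; rewrite -(card_split P) natrD.
  field; by rewrite -natrD card_split pnatr_eq0 -lt0n.
rewrite (e1 _ (fun x => a' x == b' x)) // (e1 _ (fun p => a p == b p)) //.
rewrite card_prod natrM.
have sI : #|I|%:R != 0 :> rat by rewrite pnatr_eq0 -lt0n.
have sX : #|X|%:R != 0 :> rat by rewrite pnatr_eq0 -lt0n.
set D := (X in #|I|%:R * (X%:R / _)).
have -> : #|I|%:R * (D%:R / (#|I|%:R * #|X|%:R)) = D%:R / #|X|%:R :> rat.
  by field; apply/andP; split.
rewrite ler_pM2r ?invr_gt0 ?ltr0n // ler_nat.
have -> : [set x | a' x == b' x] = [set x | (fun p => a p == b p) (i0, x)].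
  by apply/setP=> x; rewrite !inE ha hb.
exact: (card_slice i0 (fun p => a p == b p)).
Qed.

Lemma conv0 (u u' : nat -> rat) (c : rat) : 0 < c ->
  (forall n, 0 <= u' n) -> (forall n, u' n <= c * u n) ->
  converges_to u 0 -> converges_to u' 0.
Proof.
move=> c0 h0 hl cu eps e0.
have [N HN] := cu (eps / c) (divr_gt0 e0 c0).
exists N => n /HN; rewrite !subr0 => hn.
rewrite ger0_norm //; apply: (le_lt_trans (hl n)).
rewrite -ltr_pdivlMl // mulrC.
by apply: le_lt_trans hn; exact: ler_norm.
Qed.

Lemma conv1 (u u' : nat -> rat) (c : rat) : 0 < c ->
  (forall n, u' n <= 1) -> (forall n, 1 - u' n <= c * (1 - u n)) ->
  converges_to u 1 -> converges_to u' 1.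
Proof.
move=> c0 h0 hl cu eps e0.
have [N HN] := cu (eps / c) (divr_gt0 e0 c0).
exists N => n /HN hn.
rewrite distrC ger0_norm ?subr_ge0 //; apply: (le_lt_trans (hl n)).
rewrite -ltr_pdivlMl // mulrC.
by apply: le_lt_trans hn; rewrite distrC; exact: ler_norm.
Qed.

Theorem lemma4p4 (Gamma : Grp) (Gamma0 : subgroup Gamma)
    (I : finType) (q : Gamma -> I) (s : I -> Gamma)
    (hqs : coset_data Gamma0 q s)
    (X : nat -> finType) (sigma : forall n, subGrp Gamma0 -> {perm X n}) :
  sofic_approx sigma ->
  diamond (Ind hqs sigma) ->
  diamond sigma.
Proof.
move=> _ [Y [tau [theta [[_ tauf] [hom [hb hc]]]]]].
have [hq [hqs1 hs1]] := hqs.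
have ginv1 : ginv (gone : Gamma) = gone by apply: ginv_uniq; rewrite gmul1.
have indE : forall n (g : subGrp Gamma0) x,
    Ind hqs sigma n (val g) (q gone, x) = (q gone, sigma n g x).
  move=> n g x; rewrite /Ind permE /ind_fun /= hs1 gmulg1.
  have qg : q (val g) = q gone.
    by apply/esym/hq; rewrite ginv1 gmul1; exact: (valP g).
  have -> : cocycle hqs (val g) (q gone) = g.
    by apply: val_inj; rewrite /= hs1 gmulg1 qg hs1 ginv1 gmul1.
  by rewrite qg.
have Ip : (0 < #|I|)%N by apply/card_gt0P; exists (q gone).
have cp : 0 < #|I|%:R :> rat by rewrite ltr0n.
exists Y, (fun n g => tau n (val g)), (fun n x => theta n (q gone, x)).
split; [split|split; [|split]].
- move=> g h; apply: (@conv0 (fun _ => 0) _ 1).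
  + exact: ltr01.
  + by move=> n; exact: dH_ge0.
  + by move=> n; rewrite mulr0 dH_eq0 // => y; rewrite hom.
  + by move=> eps e0; exists 0%N => n _; rewrite subr0 normr0.
- move=> g gne; apply: tauf => ge; apply: gne; exact: val_inj.
- by move=> n g h y; rewrite /= hom.
- move=> g; apply: (conv0 cp _ _ (hb (val g))) => [n|n]; first exact: dH_ge0.
  apply: (@slice_le I (X n) (Y n) (q gone) (fun p => theta n (Ind hqs sigma n (val g) p)) (fun p => tau n (val g) (theta n p))) => x /=; first by rewrite indE.
  by [].
- move=> g gne.
  have vne : val g <> gone by move=> ge; apply: gne; exact: val_inj.
  apply: (conv1 cp _ _ (hc _ vne)) => [n|n]; first exact: dH_le1.
  apply: (@slice_le1 I (X n) (Y n) (q gone) (fun p => theta n (Ind hqs sigma n (val g) p)) (theta n)) => x /=; first by rewrite indE.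
  by [].
Qed.
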